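(* Let $k\ge2$, let $I$ be a purified instance relative to $C_k$, and let $I=I_1\cup\dots\cup I_m$, where $I_j$ consists of the tuples of $I$ whose corresponding edges lie in the $j$-th strongly connected component of $F_{C_k}(I)$. Then the frugal repairs of $I$ for $C_k$ are exactly the sets $r_1\cup\dots\cup r_m$ where, for each $j$, $r_j$ is a frugal repair of $I_j$ for $C_k$ (chosen independently).
   Context: $C_k=R_1(\underline{x_1},x_2),\dots,R_k(\underline{x_k},x_1)$, $k\ge2$, first attribute the key, relations of consistent or inconsistent type. A repair is a maximal subset satisfying all key constraints; $C_k^f(r)$ is the set of satisfying valuations $(a_1,\dots,a_k)$; a repair $r$ of $I$ is frugal if no repair $r'$ of $I$ has $C_k^f(r')\subsetneq C_k^f(r)$. $I$ is purified relative to $C_k$ if every tuple occurs in some tuple of $C_k^f(I)$. The instance graph $F_{C_k}(I)$ has the constants as vertices and an edge $(a,b)$ per tuple $R_i(a,b)$; constants in positions of distinct variables are distinct. For purified $I$, every edge of $F_{C_k}(I)$ has both endpoints in one strongly connected component. *)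

(* Defs.v *)
From mathcomp Require Import all_boot.
Set Implicit Arguments. Unset Strict Implicit. Unset Printing Implicit Defensive.

(* The query C_k = R_1(x_1,x_2), ..., R_k(x_k,x_1), relations indexed by
   i : 'I_k (R_{i} has key position x_i and second position x_{i+1 mod k}).  A fact R_i(a,b) is the triple
   (i, a, b).  Since constants in positions of distinct variables are
   distinct, a vertex of the instance graph is a pair (i, a) : 'I_k * D
   ("constant a in the position of variable x_i"). *)

Section Cycle.
Variables (k : nat) (D : finType).

Definition fact := ('I_k * D * D)%type.
Definition vertex := ('I_k * D)%type.

Definition rel_of (t : fact) : 'I_k := t.1.1.
Definition src (t : fact) : vertex := (t.1.1, t.1.2).
Definition dst (t : fact) : vertex := (ordS t.1.1, t.2).

Definition key_consistent (r : {set fact}) : Prop :=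
  forall i a b b', (i, a, b) \in r -> (i, a, b') \in r -> b = b'.

Definition rel_consistent (r : {set fact}) (i : 'I_k) : Prop :=
  forall a b b', (i, a, b) \in r -> (i, a, b') \in r -> b = b'.

Definition repair (I r : {set fact}) : Prop :=
  [/\ r \subset I, key_consistent r &
      forall r' : {set fact}, r \proper r' -> r' \subset I -> ~ key_consistent r'].

Definition sat_vals (r : {set fact}) : {set {ffun 'I_k -> D}} :=
  [set v : {ffun 'I_k -> D} | [forall i : 'I_k, (i, v i, v (ordS i)) \in r]].

Definition frugal (I r : {set fact}) : Prop :=
  repair I r /\
  forall r' : {set fact}, repair I r' -> ~ (sat_vals r' \proper sat_vals r).

Definition purified (I : {set fact}) : Prop :=
  forall t, t \in I ->
    exists2 v, v \in sat_vals I & t = (rel_of t, v (rel_of t), v (ordS (rel_of t))).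

Definition Fedge (I : {set fact}) : rel vertex :=
  fun u w => [exists t in I, (src t == u) && (dst t == w)].

Definition Fverts (I : {set fact}) : {set vertex} :=
  [set u | [exists t in I, (src t == u) || (dst t == u)]].

Definition sconn (I : {set fact}) (u w : vertex) : bool :=
  connect (Fedge I) u w && connect (Fedge I) w u.

Definition sccs (I : {set fact}) : {set {set vertex}} :=
  [set [set u in Fverts I | sconn I u w] | w in Fverts I].

Definition part (I : {set fact}) (S : {set vertex}) : {set fact} :=
  [set t in I | (src t \in S) && (dst t \in S)].

End Cycle.

(* Main.v *)
Require Import Defs.
From mathcomp Require Import all_boot.
Set Implicit Arguments. Unset Strict Implicit. Unset Printing Implicit Defensive.

Section Proof.
Variables (k : nat) (D : finType) (I : {set fact k D}).
Hypothesis Hk : 0 < k.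
Hypothesis Hp : purified I.

Local Notation E := (Fedge I).

Lemma iter_ordS n (j : 'I_k) : val (iter n (@ordS k) j) = (j + n) %% k.
Proof.
elim: n => [|n IH] /=; first by rewrite addn0 modn_small.
by rewrite /= IH -[((j + n) %% k).+1]addn1 modnDml -addnA addn1.
Qed.

Lemma connect_vals (v : 'I_k -> D) :
  (forall j, (j, v j, v (ordS j)) \in I) ->
  forall j j', connect E (j, v j) (j', v j').
Proof.
move=> Hv j j'.
have step : forall x, E (x, v x) (ordS x, v (ordS x)).
  by move=> x; apply/existsP; exists (x, v x, v (ordS x)); rewrite Hv /= !eqxx.
have it : forall n, connect E (j, v j) (iter n (@ordS k) j, v (iter n (@ordS k) j)).
  elim=> [|n IH] /=; first exact: connect0.
  apply: connect_trans IH _; exact: connect1.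
have -> : j' = iter ((k - j) + j') (@ordS k) j.
  apply: val_inj; rewrite iter_ordS addnA subnKC; last exact: ltnW.
  by rewrite modnDl modn_small.
exact: it.
Qed.

Lemma sconn_sym u w : sconn I u w = sconn I w u.
Proof. by rewrite /sconn andbC. Qed.

Lemma sconn_trans u w x : sconn I u w -> sconn I w x -> sconn I u x.
Proof.
move=> /andP[a b] /andP[c d]; apply/andP; split.
  exact: connect_trans a c.
exact: connect_trans d b.
Qed.

Lemma sconn_refl u : sconn I u u.
Proof. by rewrite /sconn connect0. Qed.

Lemma Fverts_src t : t \in I -> src t \in Fverts I.
Proof. by move=> tI; rewrite inE; apply/existsP; exists t; rewrite tI eqxx. Qed.

Lemma Fverts_dst t : t \in I -> dst t \in Fverts I.
Proof. by move=> tI; rewrite inE; apply/existsP; exists t; rewrite tI eqxx orbT. Qed.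

Lemma vals_I v : v \in sat_vals I -> forall j, (j, v j, v (ordS j)) \in I.
Proof. by rewrite inE => /forallP. Qed.

Lemma sconn_edge t : t \in I -> sconn I (src t) (dst t).
Proof.
move=> tI; have [v vI ->] := Hp tI.
apply/andP; split; exact: (connect_vals (vals_I vI)).
Qed.

Definition cls (u : vertex k D) : {set vertex k D} :=
  [set x in Fverts I | sconn I x u].

Lemma clsE x u : (x \in cls u) = (x \in Fverts I) && sconn I x u.
Proof. by rewrite /cls in_set. Qed.

Lemma partIn S t : (t \in part I S) = [&& t \in I, src t \in S & dst t \in S].
Proof. by rewrite /part in_set andbA. Qed.

Lemma cls_sccs u : u \in Fverts I -> cls u \in sccs I.
Proof. by move=> uF; apply/imsetP; exists u. Qed.

Lemma sccs_cls S u : S \in sccs I -> u \in S -> S = cls u.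
Proof.
case/imsetP=> w wF -> ; rewrite inE => /andP[uF uw].
apply/setP=> x; rewrite !(in_set (fun x => (x \in Fverts I) && _)).
case: (x \in Fverts I) => //=.
apply/idP/idP => h.
  by apply: (sconn_trans h); rewrite sconn_sym.
exact: sconn_trans h uw.
Qed.

Lemma partA t : t \in I -> t \in part I (cls (src t)).
Proof.
move=> tI; rewrite partIn !clsE tI Fverts_src // Fverts_dst // sconn_refl /=.
by rewrite sconn_sym sconn_edge.
Qed.

Lemma partB S t : S \in sccs I -> t \in part I S -> S = cls (src t).
Proof. by move=> HS; rewrite partIn => /and3P[_ h _]; exact: sccs_cls. Qed.

Lemma part_sub S : part I S \subset I.
Proof. by apply/subsetP=> t; rewrite partIn => /andP[]. Qed.

Lemma partE S t t' : S \in sccs I -> t \in I -> t' \in part I S ->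
  src t = src t' -> t \in part I S.
Proof.
move=> HS tI t'S e; rewrite (partB HS t'S) -e; exact: partA.
Qed.

Lemma part_disj S S' t : S \in sccs I -> S' \in sccs I ->
  t \in part I S -> t \in part I S' -> S = S'.
Proof. by move=> HS HS' h h'; rewrite (partB HS h) (partB HS' h'). Qed.

Lemma sat_mono (r1 r2 : {set fact k D}) : r1 \subset r2 -> sat_vals r1 \subset sat_vals r2.
Proof.
move=> /subsetP s; apply/subsetP=> v; rewrite !inE => /forallP h.
by apply/forallP=> j; apply: s.
Qed.

Lemma sat_split (r : {set fact k D}) v j : r \subset I -> v \in sat_vals r ->
  v \in sat_vals (r :&: part I (cls (j, v j))).
Proof.
move=> /subsetP rI; rewrite !inE => /forallP Hv.
have HI : forall j, (j, v j, v (ordS j)) \in I by move=> j'; apply: rI.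
apply/forallP=> j'; rewrite inE Hv partIn HI /= !clsE.
rewrite (Fverts_src (HI j')) (Fverts_dst (HI j')) /=.
by apply/andP; split; apply/andP; split; apply: connect_vals.
Qed.

Definition j0 : 'I_k := Ordinal Hk.

Lemma satL3 (r : {set fact k D}) v : r \subset I ->
  (v \in sat_vals r) <-> exists2 S, S \in sccs I & v \in sat_vals (r :&: part I S).
Proof.
move=> rI; split.
  move=> vr; exists (cls (j0, v j0)); last exact: sat_split.
  apply: cls_sccs.
  have := rI; move/subsetP=> rI'.
  move: vr; rewrite inE => /forallP /(_ j0) /rI' h.
  exact: (Fverts_src h).
case=> S _; apply/subsetP; apply: sat_mono; exact: subsetIl.
Qed.

Lemma satL4 (r r' : {set fact k D}) S S' v : S \in sccs I -> S' \in sccs I ->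
  v \in sat_vals (r :&: part I S) -> v \in sat_vals (r' :&: part I S') -> S = S'.
Proof.
move=> HS HS'; rewrite !inE => /forallP /(_ j0) h /forallP /(_ j0) h'.
move: h h'; rewrite in_setI => /andP[_ h]; rewrite in_setI => /andP[_ h'].
exact: part_disj HS HS' h h'.
Qed.

Lemma splitL1 (r : {set fact k D}) : r \subset I -> r = \bigcup_(S in sccs I) (r :&: part I S).
Proof.
move=> /subsetP rI; apply/setP=> t; apply/idP/idP.
  move=> tr; apply/bigcupP; exists (cls (src t)).
    exact/cls_sccs/Fverts_src/rI.
  by rewrite inE tr partA // rI.
by case/bigcupP=> S _; rewrite inE => /andP[].
Qed.

Lemma repairL2 (r : {set fact k D}) : r \subset I ->
  repair I r <-> forall S, S \in sccs I -> repair (part I S) (r :&: part I S).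
Proof.
move=> rI; have rI' := subsetP rI; split.
  case=> _ kc mx S HS; split.
  - exact: subsetIr.
  - by move=> i a b b' /setIP[h _] /setIP[h' _]; apply: kc h h'.
  - move=> r'' pr sub kc''.
    apply: (mx (r :|: r'')).
    + rewrite properE subsetUl /=; apply/negP=> /subsetP s.
      case/properP: pr => _ [t tr'' tn]; apply: (negP tn).
      by rewrite in_setI (s t) ?in_setU ?tr'' ?orbT // (subsetP sub t tr'').
    + by rewrite subUset rI /=; apply: subset_trans sub (part_sub S).
    + move=> i a b b'; rewrite !in_setU => /orP[h|h] /orP[h'|h'].
      * exact: kc h h'.
      * have : (i, a, b) \in r :&: part I S.
          by rewrite inE h (partE HS (rI' _ h) (subsetP sub _ h')).
        move/(subsetP (proper_sub pr)) => hh; exact: kc'' hh h'.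
      * have : (i, a, b') \in r :&: part I S.
          by rewrite inE h' (partE HS (rI' _ h') (subsetP sub _ h)).
        move/(subsetP (proper_sub pr)) => hh; exact: kc'' h hh.
      * exact: kc'' h h'.
move=> H; split => //.
  move=> i a b b' h h'.
  have HS := cls_sccs (Fverts_src (rI' _ h)).
  have p1 := partA (rI' _ h).
  have p2 : (i, a, b') \in part I (cls (src (i, a, b))).
    exact: partE HS (rI' _ h') p1 _.
  case: (H _ HS) => _ kc _.
  by apply: (kc i a b b'); rewrite in_setI ?h ?h' ?p1 ?p2.
move=> r' pr r'I kc'.
case/properP: pr => sr [t tr' tn].
have tI := subsetP r'I t tr'.
have HS := cls_sccs (Fverts_src tI).
case: (H _ HS) => _ _ mx; apply: (mx (r' :&: part I (cls (src t)))).
- apply/properP; split; first exact: setSI.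
  exists t; first by rewrite in_setI tr' partA.
  by rewrite in_setI (negbTE tn).
- exact: subsetIr.
- by move=> i a b b' /setIP[h _] /setIP[h' _]; apply: kc' h h'.
Qed.

Lemma frugal_split (r : {set fact k D}) : r \subset I ->
  frugal I r <-> forall S, S \in sccs I -> frugal (part I S) (r :&: part I S).
Proof.
move=> rI; split.
  case=> rep fr S HS; split; first by move/(repairL2 rI): rep; apply.
  move=> rS' repS' pr.
  case: (repS') => sS' _ _.
  set r' := rS' :|: (r :\: part I S).
  have r'I : r' \subset I.
    rewrite subUset; apply/andP; split.
      exact: subset_trans sS' (part_sub S).
    exact: subset_trans (subsetDl _ _) rI.
  have r'S : forall S', S' \in sccs I ->
      r' :&: part I S' = if S' == S then rS' else r :&: part I S'.
    move=> S' HS'; apply/setP=> t; rewrite /r' !(in_setI, in_setU, in_setD).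
    case: (eqVneq S' S) => [->|ne]; rewrite ?in_setI.
      case tS: (t \in rS'); first by rewrite (subsetP sS' t tS).
      by case: (t \in part I S) => //=; rewrite andbF.
    case u1: (t \in part I S'); rewrite ?andbT ?andbF //.
    have nS : t \notin part I S.
      by apply/negP=> h; move/eqP: ne; apply; apply: part_disj HS' HS u1 h.
    have nrS : t \notin rS'.
      by apply: contra nS; apply: (subsetP sS').
    by rewrite (negbTE nrS) nS.
  apply: (fr r').
    apply/(repairL2 r'I) => S' HS'; rewrite (r'S S' HS').
    case: (eqVneq S' S) => [e|_]; first by rewrite e.
    by move/(repairL2 rI): rep; apply.
  case/properP: pr => sub [v vr vn].
  apply/properP; split.
    apply/subsetP=> w /(satL3 _ r'I) [S' HS']; rewrite (r'S S' HS').
    case: (eqVneq S' S) => [_ wS|_ wS].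
      by apply/(satL3 _ rI); exists S => //; apply: (subsetP sub).
    by apply/(satL3 _ rI); exists S'.
  exists v; first by apply/(satL3 _ rI); exists S.
  apply/negP; move/(satL3 _ r'I) => [S' HS']; rewrite (r'S S' HS').
  case: (eqVneq S' S) => [_ h|ne h]; first by rewrite h in vn.
  by move/eqP: ne; apply; apply: satL4 HS' HS h vr.
move=> H; split.
  by apply/(repairL2 rI) => S HS; case: (H S HS).
move=> r' rep' pr.
case: (rep') => r'I _ _.
case/properP: pr => sub [v vr vn].
case/(satL3 _ rI): vr => S HS vS.
case: (H S HS) => _ fr; apply: (fr (r' :&: part I S)).
  by move/(repairL2 r'I): rep'; apply.
apply/properP; split.
  apply/subsetP=> w wS.
  have : w \in sat_vals r by apply: (subsetP sub); apply/(satL3 _ r'I); exists S.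
  case/(satL3 _ rI) => S'' HS'' wS''.
  by rewrite (satL4 HS HS'' wS wS'').
exists v => //; apply: contra vn => h.
by apply/(satL3 _ r'I); exists S.
Qed.

End Proof.

Theorem lemma4p4 (k : nat) (D : finType) (cons : 'I_k -> bool)
    (I : {set fact k D}) :
  2 <= k ->
  (forall i, cons i -> rel_consistent I i) ->
  purified I ->
  forall r : {set fact k D},
    frugal I r <->
    exists f : {set vertex k D} -> {set fact k D},
      (forall S, S \in sccs I -> frugal (part I S) (f S)) /\
      r = \bigcup_(S in sccs I) f S.
Proof.
move=> k2 _ Hp r.
have Hk : 0 < k by apply: leq_trans k2.
split.
  move=> fr; case: (fr) => [[rI _ _] _].
  exists (fun S => r :&: part I S); split.
    by move/(frugal_split Hk Hp rI): fr.
  exact: splitL1.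
case=> f [Hf ->].
have fsub : forall S, S \in sccs I -> f S \subset part I S.
  by move=> S HS; case: (Hf S HS) => [[]].
have rI : \bigcup_(S in sccs I) f S \subset I.
  apply/bigcupsP=> S HS; exact: subset_trans (fsub S HS) (part_sub I S).
apply/(frugal_split Hk Hp rI) => S HS.
suff -> : (\bigcup_(S0 in sccs I) f S0) :&: part I S = f S by apply: Hf.
apply/setP=> t; rewrite inE; apply/idP/idP.
  case/andP=> /bigcupP[S' HS' tS'] tS.
  by rewrite (part_disj HS HS' tS (subsetP (fsub S' HS') t tS')).
move=> tS; rewrite (subsetP (fsub S HS) t tS) andbT.
by apply/bigcupP; exists S.
Qed.
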